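(* Let $\mathcal M=\operatorname{Diff}_{\mathcal A}(\mathbb R)\ltimes\mathcal A(\mathbb R)$ and $\widetilde{\mathcal M}=\operatorname{Diff}_{\mathcal A_1}(\mathbb R)\ltimes\mathcal A(\mathbb R)$ with multiplication $(\varphi,\alpha)(\psi,\beta)=(\varphi\circ\psi,\beta+\alpha\circ\psi)$, equipped with the right-invariant metric determined at the identity by $$G_{(\mathrm{Id},0)}((X,a),(Y,b))=\int_{\mathbb R}X'Y'+ab\,dx.$$ Then for all Lie algebra elements $(X,a)$, $$\operatorname{ad}(X,a)^*\check G(X,a)=\check G\Big(\tfrac12\Big(\int_{-\infty}^x(X'^2+a^2)\,dy+(X^2)'\Big)\,,\ a'X+aX'\Big)$$ (up to the sign conventions of the context), which lies in $\check G(\mathcal A_1(\mathbb R)\times\mathcal A(\mathbb R))$; hence the geodesic equation on $\widetilde{\mathcal M}$ exists and, for $u=\varphi_t\circ\varphi^{-1}$ and $\rho=\alpha_t\circ\varphi^{-1}$, is the two-component Hunter--Saxton system $$u_t=-uu_x+\tfrac12\int_{-\infty}^x\big(u_x(z)^2+\rho(z)^2\big)\,dz,\qquad \rho_t=-(\rho u)_x.$$ On $\mathcal M$ the geodesic equation does not exist: for $(X,a)\in\mathcal A(\mathbb R)\times\mathcal A(\mathbb R)$, $(X,a)\neq0$, one has $\operatorname{ad}(X,a)^*\check G(X,a)\notin\check G(\mathcal A(\mathbb R)\times\mathcal A(\mathbb R))$.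
   Context: $\mathcal A(\mathbb R)$ denotes any one of $C^\infty_c(\mathbb R)$, $\mathcal S(\mathbb R)$, $W^{\infty,1}(\mathbb R)$; $\mathcal A_1(\mathbb R)=\{x\mapsto\int_{-\infty}^xg\,dy: g\in\mathcal A(\mathbb R)\}$; $\operatorname{Diff}_{\mathcal A}(\mathbb R)=\{\mathrm{Id}+f: f\in\mathcal A(\mathbb R), f'>-1\}$, $\operatorname{Diff}_{\mathcal A_1}(\mathbb R)=\{\mathrm{Id}+f: f\in\mathcal A_1(\mathbb R), f'>-1\}$. The Lie algebras are $\mathcal A(\mathbb R)\times\mathcal A(\mathbb R)$ resp. $\mathcal A_1(\mathbb R)\times\mathcal A(\mathbb R)$, with adjoint action $\operatorname{ad}(X,a)(Z,c)=(X'Z-XZ',\,-Xc'+Za')$. $\check G$ maps the Lie algebra to its dual by $\langle\check G(X,a),(Z,c)\rangle=G_{(\mathrm{Id},0)}((X,a),(Z,c))$; identifying functionals with functions via the $L^2$ pairing, $\check G(X,a)=(-X'',a)$. The geodesic equation exists when $\operatorname{ad}(v)^*\check G(v)\in\check G(\mathfrak g)$ for all $v$, and then reads $v_t=-\check G^{-1}\operatorname{ad}(v)^*\check G(v)$ for the right logarithmic derivative $v=(u,\rho)$ of the curve $(\varphi,\alpha)$, which is $(\varphi_t\circ\varphi^{-1},\alpha_t\circ\varphi^{-1})$. *)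

(* Defs.v *)
From Stdlib Require Import Reals Lra ClassicalEpsilon.
Open Scope R_scope.

(* The derivative of f (classical; junk value 0 where f is not differentiable). *)
Definition der (f : R -> R) : R -> R :=
  fun x => epsilon (inhabits 0) (fun l => derivable_pt_lim f x l).

Definition nder (n : nat) (f : R -> R) : R -> R := Nat.iter n der f.

Definition smooth (f : R -> R) : Prop :=
  forall n x, exists l, derivable_pt_lim (nder n f) x l.

Definition lim_minf (f : R -> R) (l : R) : Prop :=
  forall eps, 0 < eps -> exists M, forall x, x < M -> Rabs (f x - l) < eps.
Definition lim_pinf (f : R -> R) (l : R) : Prop :=
  forall eps, 0 < eps -> exists M, forall x, M < x -> Rabs (f x - l) < eps.

(** * Integrals over R (for continuous integrands): the (improper) integral
    of f over R is l iff f has a primitive F with F(+oo) - F(-oo) = l. *)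
Definition has_integral (f : R -> R) (l : R) : Prop :=
  exists F : R -> R, (forall x, derivable_pt_lim F x (f x)) /\
    exists L1 L2, lim_minf F L1 /\ lim_pinf F L2 /\ l = L2 - L1.

Definition integrable (f : R -> R) : Prop := exists l, has_integral f l.

Definition integral (f : R -> R) : R :=
  epsilon (inhabits 0) (fun l => has_integral f l).

Definition prim (f : R -> R) : R -> R :=
  epsilon (inhabits (fun _ : R => 0))
    (fun F => (forall x, derivable_pt_lim F x (f x)) /\ lim_minf F 0).

Inductive Aspace := Cc | Schwartz | Winf1.

Definition inA (s : Aspace) (f : R -> R) : Prop :=
  smooth f /\
  match s with
  | Cc => exists M, forall x, M < Rabs x -> f x = 0
  | Schwartz => forall k n, exists C, forall x, Rabs (x ^ k * nder n f x) <= C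
  | Winf1 => forall n, integrable (fun x => Rabs (nder n f x))
  end.

Definition inA1 (s : Aspace) (f : R -> R) : Prop :=
  exists g, inA s g /\ (forall x, derivable_pt_lim f x (g x)) /\ lim_minf f 0.

(* G_(Id,0)((Y,b),(Z,c)) = int Y' Z' + b c  = < Gcheck(Y,b), (Z,c) > *)
Definition Gmet (Y b Z c : R -> R) : R :=
  integral (fun x => der Y x * der Z x + b x * c x).

Definition ad1 (X a Z c : R -> R) : R -> R := fun x => der X x * Z x - X x * der Z x.
Definition ad2 (X a Z c : R -> R) : R -> R := fun x => - X x * der c x + Z x * der a x.

(* < ad(X,a)^* Gcheck(X,a), (Z,c) > = G((X,a), ad(X,a)(Z,c)) *)
Definition adstarG_integrand (X a Z c : R -> R) : R -> R :=
  fun x => der X x * der (ad1 X a Z c) x + a x * ad2 X a Z c x.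
Definition adstarG (X a Z c : R -> R) : R := integral (adstarG_integrand X a Z c).

(* Main.v *)
Require Import Defs.
From Stdlib Require Import Reals Lra ClassicalEpsilon FunctionalExtensionality Lia Classical.
From Coquelicot Require Coquelicot.
Open Scope R_scope.

Module PrimAux.
Import Coquelicot.Coquelicot.
Lemma prim_exists (f : R -> R) : (forall x, continuity_pt f x) ->
  exists F, forall x, derivable_pt_lim F x (f x).
Proof.
  intros Hc. exists (fun x => RInt f 0 x). intro x.
  apply is_derive_Reals.
  apply (is_derive_RInt f (fun x => RInt f 0 x) 0 x).
  - apply filter_forall. intro y.
    apply (@RInt_correct R_CompleteNormedModule). apply ex_RInt_continuous.
    intros z _. apply (continuity_pt_filterlim f). apply Hc.
  - apply (continuity_pt_filterlim f). apply Hc.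
Qed.
End PrimAux.

Definition D (f : R -> R) := forall x, exists l, derivable_pt_lim f x l.
Definition cont (f : R -> R) := forall x, continuity_pt f x.

Lemma der_pt f x l : derivable_pt_lim f x l -> der f x = l.
Proof.
  intro H. unfold der. assert (E: exists l, derivable_pt_lim f x l) by eauto.
  pose proof (epsilon_spec (inhabits 0) _ E) as H2. simpl in H2.
  eapply uniqueness_limite; eauto.
Qed.

Lemma der_ok f x : (exists l, derivable_pt_lim f x l) -> derivable_pt_lim f x (der f x).
Proof. intros [l H]. rewrite (der_pt f x l H). exact H. Qed.

Lemma der_fun f g : (forall x, derivable_pt_lim f x (g x)) -> der f = g.
Proof. intro H. extensionality x. apply der_pt, H. Qed.

Lemma D_der f : D f -> forall x, derivable_pt_lim f x (der f x).
Proof. intros H x. apply der_ok, H. Qed.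

Lemma dplus f g x l1 l2 : derivable_pt_lim f x l1 -> derivable_pt_lim g x l2 ->
  derivable_pt_lim (fun y => f y + g y) x (l1 + l2).
Proof. apply derivable_pt_lim_plus. Qed.
Lemma dminus f g x l1 l2 : derivable_pt_lim f x l1 -> derivable_pt_lim g x l2 ->
  derivable_pt_lim (fun y => f y - g y) x (l1 - l2).
Proof. apply derivable_pt_lim_minus. Qed.
Lemma dmult f g x l1 l2 : derivable_pt_lim f x l1 -> derivable_pt_lim g x l2 ->
  derivable_pt_lim (fun y => f y * g y) x (l1 * g x + f x * l2).
Proof. apply derivable_pt_lim_mult. Qed.
Lemma dconst c x : derivable_pt_lim (fun _ => c) x 0.
Proof. apply derivable_pt_lim_const. Qed.
Lemma dscal c f x l : derivable_pt_lim f x l -> derivable_pt_lim (fun y => c * f y) x (c * l).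
Proof. intro H. replace (c*l) with (0 * f x + c * l) by ring. apply dmult; auto. apply dconst. Qed.
Lemma dopp f x l : derivable_pt_lim f x l -> derivable_pt_lim (fun y => - f y) x (- l).
Proof. apply derivable_pt_lim_opp. Qed.

Lemma D_plus f g : D f -> D g -> D (fun x => f x + g x).
Proof. intros Hf Hg x. destruct (Hf x), (Hg x). eexists. apply dplus; eauto. Qed.
Lemma D_mult f g : D f -> D g -> D (fun x => f x * g x).
Proof. intros Hf Hg x. destruct (Hf x), (Hg x). eexists. apply dmult; eauto. Qed.
Lemma D_const c : D (fun _ => c).
Proof. intro x. eexists. apply dconst. Qed.

Lemma der_plus f g : D f -> D g -> der (fun x => f x + g x) = fun x => der f x + der g x.
Proof. intros Hf Hg. apply der_fun. intro x. apply dplus; apply D_der; auto. Qed.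
Lemma der_mult f g : D f -> D g ->
  der (fun x => f x * g x) = fun x => der f x * g x + f x * der g x.
Proof. intros Hf Hg. apply der_fun. intro x. apply dmult; apply D_der; auto. Qed.
Lemma der_const c : der (fun _ => c) = fun _ => 0.
Proof. apply der_fun. intro. apply dconst. Qed.

Lemma nder_S n f : nder (S n) f = nder n (der f).
Proof. unfold nder. apply Nat.iter_succ_r. Qed.
Lemma nder_S' n f : nder (S n) f = der (nder n f).
Proof. reflexivity. Qed.

Lemma D_cont f : D f -> cont f.
Proof. intros H x. apply derivable_continuous_pt. exists (der f x). apply D_der, H. Qed.

Lemma smooth_D f : smooth f -> D f.
Proof. intros H x. apply (H 0%nat x). Qed.
Lemma smooth_nD f n : smooth f -> D (nder n f).
Proof. intros H x. apply (H n x). Qed.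
Lemma smooth_der f : smooth f -> smooth (der f).
Proof. intros H n x. rewrite <- nder_S. apply H. Qed.
Lemma smooth_nder n f : smooth f -> smooth (nder n f).
Proof. induction n; simpl; auto. intro H. apply smooth_der. auto. Qed.

Lemma nder_plus : forall n f g, smooth f -> smooth g ->
  nder n (fun x => f x + g x) = fun x => nder n f x + nder n g x.
Proof.
  induction n; intros f g Hf Hg. reflexivity.
  rewrite !nder_S. rewrite der_plus by (apply smooth_D; auto).
  apply IHn; apply smooth_der; auto.
Qed.
Lemma smooth_plus f g : smooth f -> smooth g -> smooth (fun x => f x + g x).
Proof. intros Hf Hg n. rewrite nder_plus by auto. apply D_plus; apply smooth_nD; auto. Qed.

Definition Sm n h := forall k, (k <= n)%nat -> D (nder k h).
Lemma Sm_S n h : D h -> Sm n (der h) -> Sm (S n) h.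
Proof. intros H1 H2 k Hk. destruct k. exact H1. rewrite nder_S. apply H2. lia. Qed.
Lemma Sm_S_inv n h : Sm (S n) h -> D h /\ Sm n (der h).
Proof. intros H. split. apply (H 0%nat). lia. intros k Hk. rewrite <- nder_S. apply H. lia. Qed.
Lemma Sm_plus : forall n f g, Sm n f -> Sm n g -> Sm n (fun x => f x + g x).
Proof.
  induction n; intros f g Hf Hg.
  - intros k Hk. assert (k = 0%nat) by lia. subst. apply D_plus; [apply (Hf 0%nat)|apply (Hg 0%nat)]; lia.
  - apply Sm_S_inv in Hf as [Hf1 Hf2]. apply Sm_S_inv in Hg as [Hg1 Hg2].
    apply Sm_S. apply D_plus; auto. rewrite der_plus by auto. apply IHn; auto.
Qed.
Lemma smooth_Sm h : smooth h <-> forall n, Sm n h.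
Proof. split. intros H n k _. apply smooth_nD; auto. intros H n x. apply (H n n). lia. Qed.
Lemma smooth_mult f g : smooth f -> smooth g -> smooth (fun x => f x * g x).
Proof.
  intros Hf Hg. apply smooth_Sm. intro n. revert f g Hf Hg. induction n; intros f g Hf Hg.
  - intros k Hk. assert (k = 0%nat) by lia. subst. apply D_mult; apply smooth_D; auto.
  - apply Sm_S. apply D_mult; apply smooth_D; auto.
    rewrite der_mult by (apply smooth_D; auto).
    apply Sm_plus; apply IHn; auto using smooth_der.
Qed.
Lemma smooth_const c : smooth (fun _ => c).
Proof. intros n. revert c. induction n; intro c. apply D_const. rewrite nder_S, der_const. auto. Qed.
Lemma smooth_scal c f : smooth f -> smooth (fun x => c * f x).
Proof. intro. apply smooth_mult; auto using smooth_const. Qed.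


Definition Bnd (h : R -> R) := exists B, forall x, Rabs (h x) <= B.
Definition Dec (h : R -> R) := lim_minf h 0 /\ lim_pinf h 0.
Definition Intb (h : R -> R) := integrable (fun x => Rabs (h x)).
Definition nondecr (F : R -> R) := forall x y, x <= y -> F x <= F y.

Lemma mono_deriv F f : (forall x, derivable_pt_lim F x (f x)) -> (forall x, 0 <= f x) -> nondecr F.
Proof.
  intros HF Hf x y Hxy. destruct (Req_dec x y) as [->|Hne]. lra.
  destruct (MVT_cor2 F f x y) as [c [Hc _]]. lra. intros; auto.
  specialize (Hf c). assert (0 <= f c * (y - x)) by (apply Rmult_le_pos; lra). lra.
Qed.

Lemma const_deriv F : (forall x, derivable_pt_lim F x 0) -> forall x y, F x = F y.
Proof.
  intros H x y. assert (nondecr F) as H1 by (apply (mono_deriv F (fun _ => 0)); auto; intros; lra).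
  assert (nondecr (fun x => - F x)) as H2.
  { apply (mono_deriv _ (fun _ => -0)). intro z. apply dopp. auto. intros; lra. }
  destruct (Rle_dec x y); [specialize (H1 x y); specialize (H2 x y)|specialize (H1 y x); specialize (H2 y x)];
  cbv beta in *; lra.
Qed.

Lemma prim_unique F G f : (forall x, derivable_pt_lim F x (f x)) -> (forall x, derivable_pt_lim G x (f x)) ->
  forall x, F x = G x + (F 0 - G 0).
Proof.
  intros HF HG x. assert (forall x, derivable_pt_lim (fun y => F y - G y) x 0) as H.
  { intro z. replace 0 with (f z - f z) by ring. apply dminus; auto. }
  pose proof (const_deriv _ H x 0). lra.
Qed.

Lemma lim_pinf_plus f g a b : lim_pinf f a -> lim_pinf g b -> lim_pinf (fun x => f x + g x) (a + b).
Proof.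
  intros Hf Hg eps He. destruct (Hf (eps/2)) as [M1 H1]. lra. destruct (Hg (eps/2)) as [M2 H2]. lra.
  exists (Rmax M1 M2). intros x Hx. specialize (H1 x ltac:(pose proof (Rmax_l M1 M2); lra)).
  specialize (H2 x ltac:(pose proof (Rmax_r M1 M2); lra)).
  replace (f x + g x - (a + b)) with ((f x - a) + (g x - b)) by ring.
  pose proof (Rabs_triang (f x - a) (g x - b)). lra.
Qed.
Lemma lim_minf_plus f g a b : lim_minf f a -> lim_minf g b -> lim_minf (fun x => f x + g x) (a + b).
Proof.
  intros Hf Hg eps He. destruct (Hf (eps/2)) as [M1 H1]. lra. destruct (Hg (eps/2)) as [M2 H2]. lra.
  exists (Rmin M1 M2). intros x Hx. specialize (H1 x ltac:(pose proof (Rmin_l M1 M2); lra)).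
  specialize (H2 x ltac:(pose proof (Rmin_r M1 M2); lra)).
  replace (f x + g x - (a + b)) with ((f x - a) + (g x - b)) by ring.
  pose proof (Rabs_triang (f x - a) (g x - b)). lra.
Qed.
Lemma lim_pinf_const c : lim_pinf (fun _ => c) c.
Proof. intros eps He. exists 0. intros. rewrite Rminus_diag, Rabs_R0. lra. Qed.
Lemma lim_minf_const c : lim_minf (fun _ => c) c.
Proof. intros eps He. exists 0. intros. rewrite Rminus_diag, Rabs_R0. lra. Qed.
Lemma lim_pinf_scal c f a : lim_pinf f a -> lim_pinf (fun x => c * f x) (c * a).
Proof.
  intros Hf eps He. destruct (Hf (eps / (Rabs c + 1))) as [M H]. apply Rdiv_lt_0_compat; [lra|pose proof (Rabs_pos c); lra].
  exists M. intros x Hx. specialize (H x Hx). replace (c * f x - c * a) with (c * (f x - a)) by ring.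
  rewrite Rabs_mult. pose proof (Rabs_pos c). pose proof (Rabs_pos (f x - a)).
  apply Rle_lt_trans with ((Rabs c + 1) * Rabs (f x - a)). nra.
  apply Rmult_lt_reg_l with (/ (Rabs c + 1)). apply Rinv_0_lt_compat; lra.
  rewrite <- Rmult_assoc, Rinv_l by lra. lra.
Qed.
Lemma lim_minf_scal c f a : lim_minf f a -> lim_minf (fun x => c * f x) (c * a).
Proof.
  intros Hf eps He. destruct (Hf (eps / (Rabs c + 1))) as [M H]. apply Rdiv_lt_0_compat; [lra|pose proof (Rabs_pos c); lra].
  exists M. intros x Hx. specialize (H x Hx). replace (c * f x - c * a) with (c * (f x - a)) by ring.
  rewrite Rabs_mult. pose proof (Rabs_pos c). pose proof (Rabs_pos (f x - a)).
  apply Rle_lt_trans with ((Rabs c + 1) * Rabs (f x - a)). nra.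
  apply Rmult_lt_reg_l with (/ (Rabs c + 1)). apply Rinv_0_lt_compat; lra.
  rewrite <- Rmult_assoc, Rinv_l by lra. lra.
Qed.
Lemma lim_pinf_ext f g a : (forall x, f x = g x) -> lim_pinf f a -> lim_pinf g a.
Proof. intros E H eps He. destruct (H eps He) as [M HM]. exists M. intros. rewrite <- E. auto. Qed.
Lemma lim_minf_ext f g a : (forall x, f x = g x) -> lim_minf f a -> lim_minf g a.
Proof. intros E H eps He. destruct (H eps He) as [M HM]. exists M. intros. rewrite <- E. auto. Qed.
Lemma lim_pinf_unique f a b : lim_pinf f a -> lim_pinf f b -> a = b.
Proof.
  intros Ha Hb. destruct (Req_dec a b) as [Heq|Hne]; auto. exfalso.
  assert (0 < Rabs (a - b) / 2) by (apply Rdiv_lt_0_compat; [apply Rabs_pos_lt; lra|lra]).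
  destruct (Ha _ H) as [M1 H1]. destruct (Hb _ H) as [M2 H2].
  specialize (H1 (Rmax M1 M2 + 1) ltac:(pose proof (Rmax_l M1 M2); lra)).
  specialize (H2 (Rmax M1 M2 + 1) ltac:(pose proof (Rmax_r M1 M2); lra)).
  set (y := f (Rmax M1 M2 + 1)) in *.
  pose proof (Rabs_triang (a - y) (y - b)). replace (a - y + (y - b)) with (a - b) in H0 by ring.
  rewrite Rabs_minus_sym in H1. lra.
Qed.
Lemma lim_minf_unique f a b : lim_minf f a -> lim_minf f b -> a = b.
Proof.
  intros Ha Hb. destruct (Req_dec a b) as [Heq|Hne]; auto. exfalso.
  assert (0 < Rabs (a - b) / 2) by (apply Rdiv_lt_0_compat; [apply Rabs_pos_lt; lra|lra]).
  destruct (Ha _ H) as [M1 H1]. destruct (Hb _ H) as [M2 H2].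
  specialize (H1 (Rmin M1 M2 - 1) ltac:(pose proof (Rmin_l M1 M2); lra)).
  specialize (H2 (Rmin M1 M2 - 1) ltac:(pose proof (Rmin_r M1 M2); lra)).
  set (y := f (Rmin M1 M2 - 1)) in *.
  pose proof (Rabs_triang (a - y) (y - b)). replace (a - y + (y - b)) with (a - b) in H0 by ring.
  rewrite Rabs_minus_sym in H1. lra.
Qed.
Lemma lim_pinf_mult0 f m : lim_pinf f 0 -> Bnd m -> lim_pinf (fun x => f x * m x) 0.
Proof.
  intros Hf [B HB] eps He. assert (HB0 : 0 <= B) by (specialize (HB 0); pose proof (Rabs_pos (m 0)); lra).
  destruct (Hf (eps / (B + 1))) as [M HM]. apply Rdiv_lt_0_compat; lra.
  exists M. intros x Hx. specialize (HM x Hx). specialize (HB x). rewrite Rminus_0_r in *.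
  rewrite Rabs_mult. pose proof (Rabs_pos (f x)). pose proof (Rabs_pos (m x)).
  apply Rle_lt_trans with (Rabs (f x) * (B + 1)). nra.
  apply Rmult_lt_reg_r with (/ (B + 1)). apply Rinv_0_lt_compat; lra.
  rewrite Rmult_assoc, Rinv_r by lra. lra.
Qed.
Lemma lim_minf_mult0 f m : lim_minf f 0 -> Bnd m -> lim_minf (fun x => f x * m x) 0.
Proof.
  intros Hf [B HB] eps He. assert (HB0 : 0 <= B) by (specialize (HB 0); pose proof (Rabs_pos (m 0)); lra).
  destruct (Hf (eps / (B + 1))) as [M HM]. apply Rdiv_lt_0_compat; lra.
  exists M. intros x Hx. specialize (HM x Hx). specialize (HB x). rewrite Rminus_0_r in *.
  rewrite Rabs_mult. pose proof (Rabs_pos (f x)). pose proof (Rabs_pos (m x)).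
  apply Rle_lt_trans with (Rabs (f x) * (B + 1)). nra.
  apply Rmult_lt_reg_r with (/ (B + 1)). apply Rinv_0_lt_compat; lra.
  rewrite Rmult_assoc, Rinv_r by lra. lra.
Qed.


Lemma Rabs_le_inv x B : Rabs x <= B -> - B <= x <= B.
Proof. intro H. pose proof (Rle_abs x). pose proof (Rle_abs (-x)). rewrite Rabs_Ropp in H1. lra. Qed.

Lemma mono_lim_pinf F B : nondecr F -> (forall x, F x <= B) -> exists L, lim_pinf F L /\ forall x, F x <= L.
Proof.
  intros HF HB. set (E := fun y => exists x, y = F x).
  assert (bound E) as Hb by (exists B; intros y [x ->]; auto).
  assert (exists y, E y) as Hne by (exists (F 0); exists 0; auto).
  destruct (completeness E Hb Hne) as [L [HL1 HL2]].
  assert (forall x, F x <= L) as Hle by (intro x; apply HL1; exists x; auto).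
  exists L. split; auto. intros eps He.
  destruct (classic (exists x0, L - eps < F x0)) as [[x0 Hx0]|Hn].
  - exists x0. intros x Hx. pose proof (HF x0 x ltac:(lra)). pose proof (Hle x).
    rewrite Rabs_left1 by lra. lra.
  - exfalso. assert (L <= L - eps). apply HL2. intros y [x ->].
    apply Rnot_lt_le. intro. apply Hn. eauto. lra.
Qed.

Lemma mono_lim_minf F b : nondecr F -> (forall x, b <= F x) -> exists L, lim_minf F L /\ forall x, L <= F x.
Proof.
  intros HF Hb. destruct (mono_lim_pinf (fun x => - F (- x)) (- b)) as [L [HL HL2]].
  - intros x y Hxy. cbv beta. pose proof (HF (-y) (-x) ltac:(lra)). lra.
  - intro x. cbv beta. pose proof (Hb (-x)). lra.
  - exists (- L). split.
    + intros eps He. destruct (HL eps He) as [M HM]. exists (- M). intros x Hx.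
      specialize (HM (- x) ltac:(lra)). rewrite Ropp_involutive in HM.
      replace (F x - - L) with (- (- F x - L)) by ring. rewrite Rabs_Ropp. auto.
    + intro x. specialize (HL2 (- x)). rewrite Ropp_involutive in HL2. cbv beta in HL2. lra.
Qed.

Lemma mono_le_lim F L : nondecr F -> lim_pinf F L -> forall x, F x <= L.
Proof.
  intros HF HL x. apply Rnot_lt_le. intro H. destruct (HL (F x - L)) as [M HM]. lra.
  specialize (HM (Rmax M x + 1) ltac:(pose proof (Rmax_l M x); lra)).
  pose proof (HF x (Rmax M x + 1) ltac:(pose proof (Rmax_r M x); lra)).
  rewrite Rabs_right in HM by lra. lra.
Qed.
Lemma mono_ge_lim F L : nondecr F -> lim_minf F L -> forall x, L <= F x.
Proof.
  intros HF HL x. apply Rnot_lt_le. intro H. destruct (HL (L - F x)) as [M HM]. lra.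
  specialize (HM (Rmin M x - 1) ltac:(pose proof (Rmin_l M x); lra)).
  pose proof (HF (Rmin M x - 1) x ltac:(pose proof (Rmin_r M x); lra)).
  rewrite Rabs_left in HM by lra. lra.
Qed.

Lemma hasint_of_bnd_prim F f B : (forall x, derivable_pt_lim F x (f x)) -> (forall x, 0 <= f x) ->
  (forall x, Rabs (F x) <= B) -> exists l, has_integral f l.
Proof.
  intros HF Hf HB. pose proof (mono_deriv F f HF Hf) as Hm.
  destruct (mono_lim_pinf F B Hm) as [L2 [H2 _]]. intro x. pose proof (HB x). apply Rabs_le_inv in H. lra.
  destruct (mono_lim_minf F (- B) Hm) as [L1 [H1 _]]. intro x. pose proof (HB x). apply Rabs_le_inv in H. lra.
  exists (L2 - L1). exists F. split; auto. exists L1, L2. auto.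
Qed.

Lemma hasint_prim f l F : has_integral f l -> (forall x, derivable_pt_lim F x (f x)) ->
  exists L1 L2, lim_minf F L1 /\ lim_pinf F L2 /\ l = L2 - L1.
Proof.
  intros [G [HG [L1 [L2 [H1 [H2 ->]]]]]] HF.
  pose proof (prim_unique F G f HF HG) as E. set (k := F 0 - G 0) in E.
  exists (L1 + k), (L2 + k). split; [|split].
  - eapply lim_minf_ext. intro x. symmetry. apply E. apply lim_minf_plus; auto. apply lim_minf_const.
  - eapply lim_pinf_ext. intro x. symmetry. apply E. apply lim_pinf_plus; auto. apply lim_pinf_const.
  - ring.
Qed.

Lemma hasint_unique f a b : has_integral f a -> has_integral f b -> a = b.
Proof.
  intros Ha Hb. destruct Ha as [F [HF [L1 [L2 [H1 [H2 ->]]]]]].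
  destruct (hasint_prim f b F Hb HF) as [K1 [K2 [G1 [G2 ->]]]].
  rewrite (lim_minf_unique F L1 K1), (lim_pinf_unique F L2 K2); auto.
Qed.

Lemma integral_eq f l : has_integral f l -> integral f = l.
Proof.
  intro H. unfold integral. assert (E : exists l, has_integral f l) by eauto.
  pose proof (epsilon_spec (inhabits 0) _ E) as H2. simpl in H2. eapply hasint_unique; eauto.
Qed.

Lemma integrable_has f : integrable f -> has_integral f (integral f).
Proof. intros [l H]. rewrite (integral_eq f l H). auto. Qed.

Lemma hasint_plus f g a b : has_integral f a -> has_integral g b -> has_integral (fun x => f x + g x) (a + b).
Proof.
  intros [F [HF [L1 [L2 [H1 [H2 ->]]]]]] [G [HG [K1 [K2 [G1 [G2 ->]]]]]].
  exists (fun x => F x + G x). split. intro. apply dplus; auto.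
  exists (L1 + K1), (L2 + K2). split; [apply lim_minf_plus|split; [apply lim_pinf_plus|ring]]; auto.
Qed.
Lemma hasint_scal c f a : has_integral f a -> has_integral (fun x => c * f x) (c * a).
Proof.
  intros [F [HF [L1 [L2 [H1 [H2 ->]]]]]].
  exists (fun x => c * F x). split. intro. apply dscal; auto.
  exists (c * L1), (c * L2). split; [apply lim_minf_scal|split; [apply lim_pinf_scal|ring]]; auto.
Qed.
Lemma hasint_ext f g a : (forall x, f x = g x) -> has_integral f a -> has_integral g a.
Proof. intros E H. replace g with f; auto. extensionality x. auto. Qed.
Lemma hasint_der P p L1 L2 : (forall x, derivable_pt_lim P x (p x)) -> lim_minf P L1 -> lim_pinf P L2 ->
  has_integral p (L2 - L1).
Proof. intros. exists P. split; auto. exists L1, L2. auto. Qed.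

Lemma prim_ex f : cont f -> exists F, forall x, derivable_pt_lim F x (f x).
Proof. apply PrimAux.prim_exists. Qed.

Lemma cont_abs f : cont f -> cont (fun x => Rabs (f x)).
Proof. intros H x. apply (continuity_pt_comp f Rabs). apply H. apply Rcontinuity_abs. Qed.
Lemma cont_plus f g : cont f -> cont g -> cont (fun x => f x + g x).
Proof. intros Hf Hg x. apply continuity_pt_plus; auto. Qed.
Lemma cont_minus f g : cont f -> cont g -> cont (fun x => f x - g x).
Proof. intros Hf Hg x. apply continuity_pt_minus; auto. Qed.
Lemma cont_mult f g : cont f -> cont g -> cont (fun x => f x * g x).
Proof. intros Hf Hg x. apply continuity_pt_mult; auto. Qed.
Lemma cont_const c : cont (fun _ => c).
Proof. intro x. apply continuity_pt_const. intros a b. auto. Qed.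

Lemma comparison h g l : cont h -> (forall x, 0 <= h x <= g x) -> has_integral g l -> integrable h.
Proof.
  intros Hc Hhg Hg. destruct (prim_ex h Hc) as [F HF].
  destruct Hg as [G [HG [L1 [L2 [H1 [H2 ->]]]]]].
  assert (nondecr G) as HGm by (apply (mono_deriv G g); auto; intro x; specialize (Hhg x); lra).
  assert (nondecr F) as HFm by (apply (mono_deriv F h); auto; intro x; specialize (Hhg x); lra).
  assert (nondecr (fun x => G x - F x)) as HD.
  { apply (mono_deriv _ (fun x => g x - h x)). intro. apply dminus; auto. intro x. specialize (Hhg x); lra. }
  pose proof (mono_le_lim G L2 HGm H2). pose proof (mono_ge_lim G L1 HGm H1).
  apply (hasint_of_bnd_prim F h (Rabs (F 0) + (L2 - L1))); auto. intro x. specialize (Hhg x); lra.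
  intro x. apply Rabs_le. destruct (Rle_dec 0 x).
  - pose proof (HD 0 x r). pose proof (HFm 0 x r). pose proof (H x). pose proof (H0 0).
    pose proof (Rabs_le_inv (F 0) _ (Rle_refl _)). cbv beta in *. lra.
  - pose proof (HD x 0 ltac:(lra)). pose proof (HFm x 0 ltac:(lra)). pose proof (H 0). pose proof (H0 x).
    pose proof (Rabs_le_inv (F 0) _ (Rle_refl _)). cbv beta in *. lra.
Qed.

Lemma Intb_integrable h : cont h -> Intb h -> integrable h.
Proof.
  intros Hc [l Hl].
  assert (integrable (fun x => Rabs (h x) - h x)) as [l2 H2].
  { apply (comparison _ (fun x => 2 * Rabs (h x)) (2 * l)). apply cont_minus; auto. apply cont_abs; auto.
    intro x. split. pose proof (Rle_abs (h x)); lra. pose proof (Rabs_pos (h x)). pose proof (Rabs_Ropp (h x)).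
    pose proof (Rle_abs (- h x)). lra.
    apply hasint_scal; auto. }
  exists (l + -1 * l2). apply (hasint_ext (fun x => Rabs (h x) + -1 * (Rabs (h x) - h x))).
  intro; ring. apply hasint_plus; auto. apply hasint_scal; auto.
Qed.

Lemma nonneg_zero q l : cont q -> (forall x, 0 <= q x) -> has_integral q l -> l = 0 -> forall x, q x = 0.
Proof.
  intros Hc Hq [F [HF [L1 [L2 [H1 [H2 Hl]]]]]] Hl0 x.
  assert (nondecr F) as Hm by (apply (mono_deriv F q); auto).
  assert (forall y, F y = L1) as E.
  { intro y. pose proof (mono_le_lim F L2 Hm H2 y). pose proof (mono_ge_lim F L1 Hm H1 y). lra. }
  assert (F = fun _ => L1) as E2 by (extensionality y; auto).
  pose proof (HF x). rewrite E2 in H. eapply uniqueness_limite; eauto. apply dconst.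
Qed.

Lemma lim_bnd f L1 L2 : cont f -> lim_minf f L1 -> lim_pinf f L2 -> Bnd f.
Proof.
  intros Hc H1 H2. destruct (H1 1 ltac:(lra)) as [M1 HM1]. destruct (H2 1 ltac:(lra)) as [M2 HM2].
  set (a := Rmin M1 M2). set (b := Rmax M1 M2).
  assert (a <= b) by (unfold a, b; pose proof (Rmin_l M1 M2); pose proof (Rmax_l M1 M2); lra).
  destruct (continuity_ab_maj f a b H) as [x1 [Hx1 _]]. intros; auto.
  destruct (continuity_ab_maj (fun x => - f x) a b H) as [x2 [Hx2 _]]. intros. apply continuity_pt_opp. auto.
  exists (Rabs (f x1) + Rabs (f x2) + Rabs L1 + Rabs L2 + 1). intro x.
  pose proof (Rabs_pos (f x1)). pose proof (Rabs_pos (f x2)). pose proof (Rabs_pos L1). pose proof (Rabs_pos L2).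
  destruct (Rlt_dec x M1) as [h1|h1]. specialize (HM1 x h1).
  pose proof (Rabs_triang (f x - L1) L1) as T. replace (f x - L1 + L1) with (f x) in T by ring. lra.
  destruct (Rlt_dec M2 x) as [h2|h2]. specialize (HM2 x h2).
  pose proof (Rabs_triang (f x - L2) L2) as T. replace (f x - L2 + L2) with (f x) in T by ring. lra.
  assert (a <= x <= b) as Hx. { unfold a, b. split. pose proof (Rmin_l M1 M2); lra. pose proof (Rmax_r M1 M2); lra. }
  specialize (Hx1 x Hx). specialize (Hx2 x Hx). apply Rabs_le.
  pose proof (Rle_abs (f x1)). pose proof (Rle_abs (- f x2)) as T. rewrite Rabs_Ropp in T. lra.
Qed.


Lemma lim_pinf_abs h L : lim_pinf h L -> lim_pinf (fun x => Rabs (h x)) (Rabs L).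
Proof. intros H eps He. destruct (H eps He) as [M HM]. exists M. intros x Hx.
  pose proof (Rabs_triang_inv2 (h x) L). specialize (HM x Hx). lra. Qed.
Lemma lim_minf_abs h L : lim_minf h L -> lim_minf (fun x => Rabs (h x)) (Rabs L).
Proof. intros H eps He. destruct (H eps He) as [M HM]. exists M. intros x Hx.
  pose proof (Rabs_triang_inv2 (h x) L). specialize (HM x Hx). lra. Qed.

Lemma int_lim_pinf0 f L : cont f -> (forall x, 0 <= f x) -> integrable f -> lim_pinf f L -> L = 0.
Proof.
  intros Hc Hp [l Hl] HL. destruct (prim_ex f Hc) as [F HF].
  destruct (hasint_prim f l F Hl HF) as [K1 [K2 [H1 [H2 _]]]].
  assert (nondecr F) as Hm by (apply (mono_deriv F f); auto).
  pose proof (mono_le_lim F K2 Hm H2). pose proof (mono_ge_lim F K1 Hm H1).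
  assert (0 <= L) as HL0.
  { apply Rnot_lt_le. intro. destruct (HL (- L)) as [M HM]. lra. specialize (HM (M+1) ltac:(lra)).
    specialize (Hp (M+1)). rewrite Rabs_right in HM by lra. lra. }
  destruct (Req_dec L 0) as [|Hne]; auto. exfalso.
  destruct (HL (L/2)) as [M HM]. lra.
  set (a := M + 1). set (b := M + 2 + 2 * (K2 - K1) / L).
  assert (K1 <= K2) by (pose proof (H 0); pose proof (H0 0); lra).
  assert (0 <= 2 * (K2 - K1) / L) by (apply Rmult_le_pos; [lra|left; apply Rinv_0_lt_compat; lra]).
  destruct (MVT_cor2 F f a b) as [c [Hc1 Hc2]]. unfold a, b; lra. intros; auto.
  specialize (HM c ltac:(unfold a in Hc2; lra)). apply Rabs_def2 in HM.
  assert (F b - F a >= L / 2 * (b - a)).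
  { rewrite Hc1. apply Rle_ge. apply Rmult_le_compat_r. unfold a, b; lra. lra. }
  assert (L / 2 * (b - a) = (K2 - K1) + L / 2).
  { unfold a, b. field. lra. }
  pose proof (H b). pose proof (H0 a). lra.
Qed.

Lemma int_lim_minf0 f L : cont f -> (forall x, 0 <= f x) -> integrable f -> lim_minf f L -> L = 0.
Proof.
  intros Hc Hp [l Hl] HL. destruct (prim_ex f Hc) as [F HF].
  destruct (hasint_prim f l F Hl HF) as [K1 [K2 [H1 [H2 _]]]].
  assert (nondecr F) as Hm by (apply (mono_deriv F f); auto).
  pose proof (mono_le_lim F K2 Hm H2). pose proof (mono_ge_lim F K1 Hm H1).
  assert (0 <= L) as HL0.
  { apply Rnot_lt_le. intro. destruct (HL (- L)) as [M HM]. lra. specialize (HM (M-1) ltac:(lra)).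
    specialize (Hp (M-1)). rewrite Rabs_right in HM by lra. lra. }
  destruct (Req_dec L 0) as [|Hne]; auto. exfalso.
  destruct (HL (L/2)) as [M HM]. lra.
  set (b := M - 1). set (a := M - 2 - 2 * (K2 - K1) / L).
  assert (K1 <= K2) by (pose proof (H 0); pose proof (H0 0); lra).
  assert (0 <= 2 * (K2 - K1) / L) by (apply Rmult_le_pos; [lra|left; apply Rinv_0_lt_compat; lra]).
  destruct (MVT_cor2 F f a b) as [c [Hc1 Hc2]]. unfold a, b; lra. intros; auto.
  specialize (HM c ltac:(unfold b in Hc2; lra)). apply Rabs_def2 in HM.
  assert (F b - F a >= L / 2 * (b - a)).
  { rewrite Hc1. apply Rle_ge. apply Rmult_le_compat_r. unfold a, b; lra. lra. }
  assert (L / 2 * (b - a) = (K2 - K1) + L / 2).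
  { unfold a, b. field. lra. }
  pose proof (H b). pose proof (H0 a). lra.
Qed.

Lemma Dec_of_int h : D h -> cont (der h) -> Intb h -> Intb (der h) -> Dec h.
Proof.
  intros HD Hc' Hi Hi'. pose proof (D_cont h HD) as Hc.
  destruct (Intb_integrable (der h) Hc' Hi') as [l Hl].
  destruct (hasint_prim (der h) l h Hl (D_der h HD)) as [L1 [L2 [H1 [H2 _]]]].
  assert (Rabs L1 = 0).
  { apply (int_lim_minf0 (fun x => Rabs (h x))). apply cont_abs; auto. intro; apply Rabs_pos. exact Hi.
    apply lim_minf_abs; auto. }
  assert (Rabs L2 = 0).
  { apply (int_lim_pinf0 (fun x => Rabs (h x))). apply cont_abs; auto. intro; apply Rabs_pos. exact Hi.
    apply lim_pinf_abs; auto. }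
  assert (L1 = 0). { destruct (Req_dec L1 0); auto. pose proof (Rabs_pos_lt L1 H3). lra. }
  assert (L2 = 0). { destruct (Req_dec L2 0); auto. pose proof (Rabs_pos_lt L2 H4). lra. }
  subst. split; auto.
Qed.


Definition Cs (s : Aspace) (h : R -> R) : Prop :=
  match s with
  | Cc => exists M, forall x, M < Rabs x -> h x = 0
  | Schwartz => forall k, exists C, forall x, Rabs (x ^ k * h x) <= C
  | Winf1 => Intb h
  end.

Lemma supp_der h M : (forall x, M < Rabs x -> h x = 0) -> forall x, M < Rabs x -> der h x = 0.
Proof.
  intros H x Hx. apply der_pt. intros eps He.
  assert (0 < Rabs x - M) as Hd by lra. exists (mkposreal _ Hd). intros t Ht0 Ht. simpl in Ht.
  rewrite (H x Hx), (H (x + t)). replace ((0 - 0) / t - 0) with 0 by (field; auto). rewrite Rabs_R0. lra.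
  pose proof (Rabs_triang_inv x (-t)). rewrite Rabs_Ropp in H0. replace (x - - t) with (x + t) in H0 by ring. lra.
Qed.

Lemma inA_iff s f : inA s f <-> smooth f /\ forall n, Cs s (nder n f).
Proof.
  destruct s; unfold inA, Cs.
  - split; intros [Hs H]; split; auto.
    + destruct H as [M HM]. intro n. exists M. induction n. exact HM. intros x Hx. simpl. apply (supp_der _ M); auto.
    + apply (H 0%nat).
  - split; intros [Hs H]; split; auto.
  - split; intros [Hs H]; split; auto.
Qed.

Lemma Cs_plus s h g : cont h -> cont g -> Cs s h -> Cs s g -> Cs s (fun x => h x + g x).
Proof.
  destruct s; simpl; intros Hh Hg H1 H2.
  - destruct H1 as [M1 HM1]. destruct H2 as [M2 HM2]. exists (Rmax M1 M2). intros x Hx.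
    rewrite HM1, HM2. ring. pose proof (Rmax_r M1 M2); lra. pose proof (Rmax_l M1 M2); lra.
  - intro k. destruct (H1 k) as [C1 HC1]. destruct (H2 k) as [C2 HC2]. exists (C1 + C2). intro x.
    rewrite Rmult_plus_distr_l. pose proof (Rabs_triang (x ^ k * h x) (x ^ k * g x)). specialize (HC1 x). specialize (HC2 x). lra.
  - destruct H1 as [l1 Hl1]. destruct H2 as [l2 Hl2].
    apply (comparison _ (fun x => Rabs (h x) + Rabs (g x)) (l1 + l2)).
    apply cont_abs, cont_plus; auto. intro x. split. apply Rabs_pos. apply Rabs_triang.
    apply hasint_plus; auto.
Qed.

Lemma Cs_mult s h m : cont h -> cont m -> Bnd m -> Cs s h -> Cs s (fun x => h x * m x).
Proof.
  intros Hh Hm [B HB]. assert (HB0 : 0 <= B) by (specialize (HB 0); pose proof (Rabs_pos (m 0)); lra).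
  destruct s; simpl; intros H1.
  - destruct H1 as [M HM]. exists M. intros x Hx. rewrite HM by auto. ring.
  - intro k. destruct (H1 k) as [C HC]. exists (C * B). intro x.
    replace (x ^ k * (h x * m x)) with ((x ^ k * h x) * m x) by ring. rewrite Rabs_mult.
    apply Rmult_le_compat; auto using Rabs_pos.
  - destruct H1 as [l Hl]. apply (comparison _ (fun x => B * Rabs (h x)) (B * l)).
    apply cont_abs, cont_mult; auto. intro x. split. apply Rabs_pos. rewrite Rabs_mult, Rmult_comm.
    apply Rmult_le_compat_r; auto using Rabs_pos. apply hasint_scal; auto.
Qed.

Lemma Cs_DI s h : D h -> cont (der h) -> Cs s h -> Cs s (der h) -> Dec h /\ Intb h.
Proof.
  intros HD Hc' H1 H2. pose proof (D_cont h HD) as Hc. destruct s; simpl in H1, H2.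
  - destruct H1 as [M HM]. split.
    + split.
      * intros eps He. exists (- Rabs M - 1). intros x Hx. rewrite HM. rewrite Rminus_0_r, Rabs_R0; lra.
        rewrite Rabs_left by (pose proof (Rabs_pos M); lra). pose proof (Rle_abs M). lra.
      * intros eps He. exists (Rabs M + 1). intros x Hx. rewrite HM. rewrite Rminus_0_r, Rabs_R0; lra.
        rewrite Rabs_right by (pose proof (Rabs_pos M); lra). pose proof (Rle_abs M). lra.
    + destruct (prim_ex (fun x => Rabs (h x))) as [F HF]. apply cont_abs; auto.
      set (M' := Rabs M + 1). assert (M < M') by (unfold M'; pose proof (Rle_abs M); lra).
      assert (0 < M') by (unfold M'; pose proof (Rabs_pos M); lra).
      assert (nondecr F) as Hm by (apply (mono_deriv F _ HF); intro; apply Rabs_pos).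
      assert (forall y, M' < y -> F y = F M') as Hr.
      { intros y Hy. destruct (MVT_cor2 F (fun x => Rabs (h x)) M' y Hy) as [c [E Hcc]]. intros; auto.
        rewrite HM in E. rewrite Rabs_R0 in E. lra. rewrite Rabs_right; lra. }
      assert (forall y, y < - M' -> F y = F (- M')) as Hl.
      { intros y Hy. destruct (MVT_cor2 F (fun x => Rabs (h x)) y (- M') Hy) as [c [E Hcc]]. intros; auto.
        rewrite HM in E. rewrite Rabs_R0 in E. lra. rewrite Rabs_left; lra. }
      apply (hasint_of_bnd_prim F (fun x => Rabs (h x)) (Rabs (F M') + Rabs (F (- M')))); auto. intro; apply Rabs_pos.
      intro x. pose proof (Rle_abs (F M')). pose proof (Rle_abs (- F M')). pose proof (Rle_abs (F (-M'))).
      pose proof (Rle_abs (- F (-M'))). rewrite Rabs_Ropp in *. pose proof (Rabs_pos (F M')). pose proof (Rabs_pos (F (-M'))).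
      apply Rabs_le. destruct (Rlt_dec M' x) as [r1|r1]. rewrite (Hr x r1). lra.
      destruct (Rlt_dec x (- M')) as [r2|r2]. rewrite (Hl x r2). lra.
      pose proof (Hm x M' ltac:(lra)). pose proof (Hm (- M') x ltac:(lra)). lra.
  - destruct (H1 0%nat) as [C0 HC0]. destruct (H1 1%nat) as [C1 HC1]. destruct (H1 2%nat) as [C2 HC2].
    assert (0 <= C1) by (specialize (HC1 0); pose proof (Rabs_pos (0 ^ 1 * h 0)); lra).
    assert (0 <= C0) by (specialize (HC0 0); pose proof (Rabs_pos (0 ^ 0 * h 0)); lra).
    assert (0 <= C2) by (specialize (HC2 0); pose proof (Rabs_pos (0 ^ 2 * h 0)); lra).
    assert (forall x, x <> 0 -> Rabs (h x) <= C1 / Rabs x) as Hd.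
    { intros x Hx. specialize (HC1 x). rewrite pow_1, Rabs_mult in HC1. pose proof (Rabs_pos_lt x Hx).
      apply Rmult_le_reg_l with (Rabs x); auto. unfold Rdiv. rewrite (Rmult_comm C1), <- Rmult_assoc, Rinv_r by lra. lra. }
    split.
    + split.
      * intros eps He. exists (- (C1 / eps) - 1). intros x Hx.
        assert (Hq : 0 <= C1 / eps) by (apply Rmult_le_pos; [lra|left; apply Rinv_0_lt_compat; lra]).
        rewrite Rminus_0_r. assert (Hx0 : x <> 0) by (intro Hz; rewrite Hz in Hx; lra). specialize (Hd x Hx0). rewrite (Rabs_left x) in Hd by lra.
        apply Rle_lt_trans with (C1 / - x); auto. apply Rmult_lt_reg_r with (- x). lra.
        unfold Rdiv. rewrite Rmult_assoc, Rinv_l by lra.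
        apply Rmult_lt_reg_l with (/ eps). apply Rinv_0_lt_compat; lra.
        replace (/ eps * (eps * - x)) with (- x) by (field; lra). unfold Rdiv in Hq. lra.
      * intros eps He. exists (C1 / eps + 1). intros x Hx.
        assert (Hq : 0 <= C1 / eps) by (apply Rmult_le_pos; [lra|left; apply Rinv_0_lt_compat; lra]).
        rewrite Rminus_0_r. assert (Hx0 : x <> 0) by (intro Hz; rewrite Hz in Hx; lra). specialize (Hd x Hx0). rewrite (Rabs_right x) in Hd by lra.
        apply Rle_lt_trans with (C1 / x); auto. apply Rmult_lt_reg_r with x. lra.
        unfold Rdiv. rewrite Rmult_assoc, Rinv_l by lra.
        apply Rmult_lt_reg_l with (/ eps). apply Rinv_0_lt_compat; lra.
        replace (/ eps * (eps * x)) with x by (field; lra). unfold Rdiv in Hq. lra.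
    + destruct (hasint_of_bnd_prim (fun x => (C0 + C2) * atan x) (fun x => (C0 + C2) * / (1 + x ^ 2)) ((C0 + C2) * PI))
        as [l Hl].
      * intro x. apply dscal. apply derivable_pt_lim_atan.
      * intro x. apply Rmult_le_pos. lra. left. apply Rinv_0_lt_compat. pose proof (pow2_ge_0 x). lra.
      * intro x. rewrite Rabs_mult, Rabs_right by lra. apply Rmult_le_compat_l. lra.
        pose proof (atan_bound x). pose proof PI_RGT_0. apply Rabs_le. lra.
      * apply (comparison (fun x => Rabs (h x)) (fun x => (C0 + C2) * / (1 + x ^ 2)) l); [apply cont_abs; auto| |exact Hl]. intro x. split. apply Rabs_pos.
        pose proof (pow2_ge_0 x). specialize (HC0 x). specialize (HC2 x).
        rewrite pow_O, Rmult_1_l in HC0. rewrite Rabs_mult, (Rabs_right (x ^ 2)) in HC2 by lra.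
        apply Rmult_le_reg_l with (1 + x ^ 2). lra.
        replace ((1 + x ^ 2) * ((C0 + C2) * / (1 + x ^ 2))) with (C0 + C2) by (field; lra). lra.
  - split; auto. apply Dec_of_int; auto.
Qed.


Definition Mc (m : R -> R) := smooth m /\ forall n, Bnd (nder n m).

Lemma smooth_cont f : smooth f -> cont f.
Proof. intro H. apply D_cont, smooth_D, H. Qed.
Lemma smooth_ncont f n : smooth f -> cont (nder n f).
Proof. intro H. apply smooth_cont, smooth_nder, H. Qed.

Lemma A_props s f : inA s f -> forall n, Dec (nder n f) /\ Intb (nder n f) /\ Bnd (nder n f) /\ cont (nder n f).
Proof.
  intros H n. apply inA_iff in H as [Hs HC].
  assert (cont (nder n f)) by (apply smooth_ncont; auto).
  destruct (Cs_DI s (nder n f)) as [Hd Hi]; auto.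
  apply smooth_nD; auto. apply (smooth_ncont f (S n)); auto. apply (HC (S n)).
  repeat split; auto; try apply Hd. destruct Hd. eapply lim_bnd; eauto.
Qed.

Lemma A_smooth s f : inA s f -> smooth f.
Proof. intro H. apply inA_iff in H. tauto. Qed.
Lemma A_M s f : inA s f -> Mc f.
Proof. intro H. split. eapply A_smooth; eauto. intro n. apply (A_props s f H n). Qed.
Lemma A_Dec s f : inA s f -> Dec f.
Proof. intro H. apply (A_props s f H 0%nat). Qed.
Lemma A_cont s f : inA s f -> cont f.
Proof. intro H. apply (A_props s f H 0%nat). Qed.
Lemma A_integrable s f : inA s f -> integrable f.
Proof. intro H. destruct (A_props s f H 0%nat) as [_ [Hi [_ Hc]]]. apply Intb_integrable; auto. Qed.
Lemma M_Bnd m : Mc m -> Bnd m.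
Proof. intros [_ H]. apply (H 0%nat). Qed.

Lemma inA_ext s f g : (forall x, f x = g x) -> inA s f -> inA s g.
Proof. intros E H. replace g with f; auto. extensionality x; auto. Qed.
Lemma Mc_ext f g : (forall x, f x = g x) -> Mc f -> Mc g.
Proof. intros E H. replace g with f; auto. extensionality x; auto. Qed.

Lemma A_der s f : inA s f -> inA s (der f).
Proof. intro H. apply inA_iff in H as [Hs HC]. apply inA_iff. split. apply smooth_der; auto.
  intro n. rewrite <- nder_S. auto. Qed.
Lemma M_der m : Mc m -> Mc (der m).
Proof. intros [Hs HB]. split. apply smooth_der; auto. intro n. rewrite <- nder_S. auto. Qed.

Lemma A_plus s f g : inA s f -> inA s g -> inA s (fun x => f x + g x).
Proof.
  intros Hf Hg. pose proof (A_smooth s f Hf). pose proof (A_smooth s g Hg).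
  apply inA_iff in Hf as [_ Hf]. apply inA_iff in Hg as [_ Hg].
  apply inA_iff. split. apply smooth_plus; auto. intro n. rewrite nder_plus by auto.
  apply Cs_plus; auto; apply smooth_ncont; auto.
Qed.

Lemma A_mulM s f m : inA s f -> Mc m -> inA s (fun x => f x * m x).
Proof.
  intros Hf Hm. apply inA_iff. split. apply smooth_mult. eapply A_smooth; eauto. apply Hm.
  intro n. revert f m Hf Hm. induction n; intros f m Hf Hm.
  - simpl. apply Cs_mult. eapply A_cont; eauto. apply smooth_cont, Hm. apply M_Bnd; auto.
    apply inA_iff in Hf. apply (proj2 Hf 0%nat).
  - pose proof (A_smooth s f Hf). destruct Hm as [Hms HmB].
    rewrite nder_S. rewrite der_mult by (apply smooth_D; auto).
    rewrite nder_plus by (apply smooth_mult; auto using smooth_der).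
    apply Cs_plus. apply smooth_ncont, smooth_mult; auto using smooth_der.
    apply smooth_ncont, smooth_mult; auto using smooth_der.
    apply IHn. apply A_der; auto. split; auto.
    apply IHn. auto. apply M_der. split; auto.
Qed.

Lemma A_mult s f g : inA s f -> inA s g -> inA s (fun x => f x * g x).
Proof. intros. apply A_mulM; auto. eapply A_M; eauto. Qed.

Lemma nder_const n c : nder n (fun _ => c) = fun _ => if n then c else 0.
Proof. induction n. reflexivity. rewrite nder_S', IHn. apply der_const. Qed.

Lemma M_const c : Mc (fun _ => c).
Proof. split. apply smooth_const. intro n. rewrite nder_const.
  exists (Rabs c + 0). intro x. destruct n; rewrite ?Rabs_R0; pose proof (Rabs_pos c); lra. Qed.

Lemma A_scal s c f : inA s f -> inA s (fun x => c * f x).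
Proof. intro H. apply (inA_ext s (fun x => f x * c)). intro; ring. apply A_mulM; auto. apply M_const. Qed.
Lemma A_opp s f : inA s f -> inA s (fun x => - f x).
Proof. intro H. apply (inA_ext s (fun x => -1 * f x)). intro; ring. apply A_scal; auto. Qed.
Lemma A_minus s f g : inA s f -> inA s g -> inA s (fun x => f x - g x).
Proof. intros. apply (inA_ext s (fun x => f x + - g x)). intro; ring. apply A_plus; auto. apply A_opp; auto. Qed.

Lemma Cs_zero s : Cs s (fun _ => 0).
Proof.
  destruct s; simpl.
  - exists 0. auto.
  - intro k. exists 0. intro x. rewrite Rmult_0_r, Rabs_R0. lra.
  - exists (0 - 0). apply (hasint_ext (fun _ => 0)). intro; rewrite Rabs_R0; auto.
    apply (hasint_der (fun _ => 0)). intro; apply dconst. apply lim_minf_const. apply lim_pinf_const.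
Qed.
Lemma A_zero s : inA s (fun _ => 0).
Proof. apply inA_iff. split. apply smooth_const. intro n. rewrite nder_const. destruct n; apply Cs_zero. Qed.

Lemma A1_props s X : inA1 s X -> der X = (fun x => der X x) /\ inA s (der X) /\ smooth X /\ lim_minf X 0.
Proof.
  intros [g [Hg [HX Hl]]]. rewrite (der_fun X g HX). split; auto. split; auto. split; auto.
  intros n. destruct n. intro x. eauto. rewrite nder_S, (der_fun X g HX). apply (A_smooth s g Hg).
Qed.

Lemma A1_der s X : inA1 s X -> inA s (der X).
Proof. intro H. apply (A1_props s X H). Qed.
Lemma A1_smooth s X : inA1 s X -> smooth X.
Proof. intro H. apply (A1_props s X H). Qed.
Lemma A1_lim s X : inA1 s X -> lim_minf X 0.
Proof. intros [g [Hg [HX Hl]]]. auto. Qed.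

Lemma A1_M s X : inA1 s X -> Mc X.
Proof.
  intro H. pose proof (A1_der s X H) as Hd. pose proof (A1_smooth s X H) as Hs. split; auto. intro n. destruct n.
  - destruct (A_integrable s _ Hd) as [l Hl].
    destruct (hasint_prim _ l X Hl (D_der X (smooth_D X Hs))) as [L1 [L2 [H1 [H2 _]]]].
    eapply lim_bnd; eauto. apply smooth_cont; auto.
  - rewrite nder_S. apply (A_M s _ Hd).
Qed.

Lemma A_A1 s f : inA s f -> inA1 s f.
Proof. intro H. exists (der f). split. apply A_der; auto. split. apply D_der, smooth_D. eapply A_smooth; eauto.
  apply (A_Dec s f H). Qed.

Lemma A1_plus s f g : inA1 s f -> inA1 s g -> inA1 s (fun x => f x + g x).
Proof.
  intros Hf Hg. exists (fun x => der f x + der g x). split. apply A_plus; eapply A1_der; eauto.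
  split. intro x. apply dplus; apply D_der, smooth_D; eapply A1_smooth; eauto.
  replace 0 with (0 + 0) by ring. apply lim_minf_plus; eapply A1_lim; eauto.
Qed.


Lemma Dec_mulB f m : Dec f -> Bnd m -> Dec (fun x => f x * m x).
Proof. intros [H1 H2] Hm. split; [apply lim_minf_mult0|apply lim_pinf_mult0]; auto. Qed.
Lemma Dec_plus f g : Dec f -> Dec g -> Dec (fun x => f x + g x).
Proof. intros [H1 H2] [G1 G2]. split; replace 0 with (0+0) by ring; [apply lim_minf_plus|apply lim_pinf_plus]; auto. Qed.
Lemma Dec_ext f g : (forall x, f x = g x) -> Dec f -> Dec g.
Proof. intros E [H1 H2]. split; [eapply lim_minf_ext|eapply lim_pinf_ext]; eauto. Qed.
Lemma Bnd_plus f g : Bnd f -> Bnd g -> Bnd (fun x => f x + g x).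
Proof. intros [B1 H1] [B2 H2]. exists (B1 + B2). intro x. pose proof (Rabs_triang (f x) (g x)).
  specialize (H1 x). specialize (H2 x). lra. Qed.
Lemma Bnd_mult f g : Bnd f -> Bnd g -> Bnd (fun x => f x * g x).
Proof. intros [B1 H1] [B2 H2]. exists (B1 * B2). intro x. rewrite Rabs_mult.
  apply Rmult_le_compat; auto using Rabs_pos. Qed.
Lemma Bnd_const c : Bnd (fun _ => c).
Proof. exists (Rabs c). intro; lra. Qed.
Lemma Bnd_ext f g : (forall x, f x = g x) -> Bnd f -> Bnd g.
Proof. intros E [B H]. exists B. intro x. rewrite <- E. auto. Qed.

Lemma dval f x l l' : derivable_pt_lim f x l -> l = l' -> derivable_pt_lim f x l'.
Proof. intros H ->. auto. Qed.
Lemma dsq f x l : derivable_pt_lim f x l -> derivable_pt_lim (fun y => f y ^ 2) x (2 * f x * l).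
Proof.
  intro H. replace (fun y => f y ^ 2) with (fun y => f y * f y) by (extensionality y; ring).
  eapply dval. apply dmult; eauto. ring.
Qed.

Lemma prim_spec f : cont f -> integrable f ->
  (forall x, derivable_pt_lim (prim f) x (f x)) /\ lim_minf (prim f) 0 /\ lim_pinf (prim f) (integral f).
Proof.
  intros Hc Hi. pose proof (integrable_has f Hi) as Hl.
  assert (exists F, (forall x, derivable_pt_lim F x (f x)) /\ lim_minf F 0) as E.
  { destruct (prim_ex f Hc) as [F HF]. destruct (hasint_prim f _ F Hl HF) as [L1 [L2 [H1 [H2 _]]]].
    exists (fun x => F x + - L1). split. intro x. eapply dval. apply dplus. apply HF. apply dconst. ring.
    replace 0 with (L1 + - L1) by ring. apply lim_minf_plus; auto. apply lim_minf_const. }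
  pose proof (epsilon_spec (inhabits (fun _ : R => 0)) _ E) as [H1 H2]. fold (prim f) in H1, H2.
  split; auto. split; auto.
  destruct (hasint_prim f _ _ Hl H1) as [K1 [K2 [G1 [G2 Hk]]]].
  assert (K1 = 0) by (symmetry; eapply lim_minf_unique; eauto). subst K1.
  replace (integral f) with K2 by lra. auto.
Qed.


Definition qfun (X a : R -> R) := fun y => der X y ^ 2 + a y ^ 2.
Definition Yfun (X a : R -> R) := fun x => / 2 * (der (fun y => X y ^ 2) x
                              - prim (fun y => der X y ^ 2 + a y ^ 2) x).
Definition Ypf (X a : R -> R) := fun x => X x * der (der X) x + / 2 * der X x ^ 2 - / 2 * a x ^ 2.
Definition bfun (X a : R -> R) := fun x => der a x * X x + a x * der X x.
Definition Jfun (X a Z c : R -> R) := fun x => Ypf X a x * der Z x + bfun X a x * c x.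

Lemma der_sq X : D X -> der (fun y => X y ^ 2) = fun x => 2 * X x * der X x.
Proof. intro H. apply der_fun. intro x. apply dsq. apply D_der; auto. Qed.

Lemma q_A s X a : inA1 s X -> inA s a -> inA s (qfun X a).
Proof.
  intros HX Ha. pose proof (A1_der s X HX) as H1. unfold qfun.
  apply (inA_ext s (fun y => der X y * der X y + a y * a y)). intro; ring.
  apply A_plus; apply A_mult; auto.
Qed.

Lemma core s X a : inA1 s X -> inA s a ->
  (forall x, derivable_pt_lim (Yfun X a) x (Ypf X a x)) /\ inA s (Ypf X a) /\
  lim_minf (Yfun X a) 0 /\ lim_pinf (Yfun X a) (- / 2 * integral (qfun X a)) /\
  inA s (bfun X a).
Proof.
  intros HX Ha. pose proof (A1_der s X HX) as H1. pose proof (A1_smooth s X HX) as Hs.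
  pose proof (A1_M s X HX) as HM. pose proof (A_der s _ H1) as H2.
  pose proof (q_A s X a HX Ha) as Hq.
  destruct (prim_spec (qfun X a)) as [P1 [P2 P3]]. eapply A_cont; eauto. eapply A_integrable; eauto.
  assert (Yfun X a = fun x => / 2 * (2 * X x * der X x - prim (qfun X a) x)) as EY.
  { unfold Yfun. rewrite der_sq by (apply smooth_D; auto). reflexivity. }
  assert (forall x, derivable_pt_lim X x (der X x)) as DX by (apply D_der, smooth_D; auto).
  assert (forall x, derivable_pt_lim (der X) x (der (der X) x)) as DX1
    by (apply D_der, smooth_D, smooth_der; auto).
  assert (Dec (fun x => der X x * X x)) as DXX by (apply Dec_mulB; [eapply A_Dec; eauto|apply M_Bnd; auto]).
  split; [|split; [|split; [|split]]].
  - intro x. rewrite EY. eapply dval.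
    repeat first [apply dscal | apply dminus | apply dmult | apply DX | apply DX1 | apply P1].
    unfold Ypf, qfun. cbv beta. field.
  - unfold Ypf. apply A_minus. apply A_plus.
    apply (inA_ext s (fun x => der (der X) x * X x)). intro; ring. apply A_mulM; auto.
    apply (inA_ext s (fun x => / 2 * (der X x * der X x))). intro; ring. apply A_scal, A_mult; auto.
    apply (inA_ext s (fun x => / 2 * (a x * a x))). intro; ring. apply A_scal, A_mult; auto.
  - rewrite EY. apply (lim_minf_ext (fun x => (/2*2) * (der X x * X x) + (-/2) * prim (qfun X a) x)).
    intro; field. replace 0 with ((/2*2)*0 + (-/2)*0) by ring.
    apply lim_minf_plus; apply lim_minf_scal; auto. apply DXX.
  - rewrite EY. apply (lim_pinf_ext (fun x => (/2*2) * (der X x * X x) + (-/2) * prim (qfun X a) x)).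
    intro; field. replace (- / 2 * integral (qfun X a)) with ((/2*2)*0 + (-/2)*integral (qfun X a)) by ring.
    apply lim_pinf_plus; apply lim_pinf_scal; auto. apply DXX.
  - unfold bfun. apply A_plus. apply A_mulM; auto. apply A_der; auto. apply A_mult; auto.
Qed.

Lemma Bnd_A s f : inA s f -> Bnd f.
Proof. intro H. apply M_Bnd. eapply A_M; eauto. Qed.
Lemma Bnd_A1 s f : inA1 s f -> Bnd f.
Proof. intro H. apply M_Bnd. eapply A1_M; eauto. Qed.

Lemma core2 s X a Z c : inA1 s X -> inA s a -> inA1 s Z -> inA s c ->
  inA s (Jfun X a Z c) /\ has_integral (adstarG_integrand X a Z c) (integral (Jfun X a Z c)).
Proof.
  intros HX Ha HZ Hc. destruct (core s X a HX Ha) as [_ [HYp [_ [_ Hb]]]].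
  pose proof (A1_der s X HX) as HX1. pose proof (A1_der s Z HZ) as HZ1.
  pose proof (A1_smooth s X HX) as HsX. pose proof (A1_smooth s Z HZ) as HsZ.
  pose proof (A_smooth s a Ha) as Hsa. pose proof (A_smooth s c Hc) as Hsc.
  assert (forall x, derivable_pt_lim X x (der X x)) as DX by (apply D_der, smooth_D; auto).
  assert (forall x, derivable_pt_lim (der X) x (der (der X) x)) as DX1 by (apply D_der, smooth_D, smooth_der; auto).
  assert (forall x, derivable_pt_lim Z x (der Z x)) as DZ by (apply D_der, smooth_D; auto).
  assert (forall x, derivable_pt_lim (der Z) x (der (der Z) x)) as DZ1 by (apply D_der, smooth_D, smooth_der; auto).
  assert (forall x, derivable_pt_lim a x (der a x)) as Da by (apply D_der, smooth_D; auto).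
  assert (forall x, derivable_pt_lim c x (der c x)) as Dc by (apply D_der, smooth_D; auto).
  assert (HJ : inA s (Jfun X a Z c)).
  { unfold Jfun. apply A_plus; apply A_mult; auto. }
  split; auto.
  assert (Ead1 : der (ad1 X a Z c) = fun x => der (der X) x * Z x - X x * der (der Z) x).
  { apply der_fun. intro x. unfold ad1. eapply dval.
    repeat first [apply dminus | apply dmult | apply DX | apply DX1 | apply DZ | apply DZ1]. ring. }
  set (P := fun x => der X x * (/2 * der X x * Z x - X x * der Z x) + a x * (/2 * a x * Z x - X x * c x)).
  assert (DP : forall x, derivable_pt_lim P x (adstarG_integrand X a Z c x - Jfun X a Z c x)).
  { intro x. unfold P. eapply dval.
    repeat first [apply dplus | apply dminus | apply dmult | apply dscal
                 | apply DX | apply DX1 | apply DZ | apply DZ1 | apply Da | apply Dc | apply dconst | apply dopp].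
    unfold adstarG_integrand, ad2, Jfun, Ypf, bfun. rewrite Ead1. cbv beta. field. }
  assert (BX : Bnd X) by (eapply Bnd_A1; eauto). assert (BZ : Bnd Z) by (eapply Bnd_A1; eauto).
  assert (BX1 : Bnd (der X)) by (eapply Bnd_A; eauto). assert (BZ1 : Bnd (der Z)) by (eapply Bnd_A; eauto).
  assert (Ba : Bnd a) by (eapply Bnd_A; eauto). assert (Bc : Bnd c) by (eapply Bnd_A; eauto).
  assert (DecP : Dec P).
  { unfold P. apply Dec_plus; apply Dec_mulB.
    - eapply A_Dec; eauto.
    - apply (Bnd_ext (fun x => (/2 * der X x) * Z x + (-1 * X x) * der Z x)). intro; ring.
      repeat first [apply Bnd_plus | apply Bnd_mult | apply Bnd_const | assumption].
    - eapply A_Dec; eauto.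
    - apply (Bnd_ext (fun x => (/2 * a x) * Z x + (-1 * X x) * c x)). intro; ring.
      repeat first [apply Bnd_plus | apply Bnd_mult | apply Bnd_const | assumption]. }
  destruct DecP as [P1 P2].
  pose proof (hasint_der P _ 0 0 DP P1 P2) as HP.
  pose proof (integrable_has _ (A_integrable s _ HJ)) as HJi.
  pose proof (hasint_plus _ _ _ _ HJi HP) as Hsum.
  replace (integral (Jfun X a Z c)) with (integral (Jfun X a Z c) + (0 - 0)) by ring.
  eapply hasint_ext; [|exact Hsum]. intro x. cbv beta. ring.
Qed.


Lemma const_lim0 W : (forall x, derivable_pt_lim W x 0) -> lim_minf W 0 -> forall x, W x = 0.
Proof.
  intros HW Hl x. pose proof (const_deriv W HW) as E.
  assert (lim_minf W (W 0)). { apply (lim_minf_ext (fun _ => W 0)). intro; symmetry; apply E. apply lim_minf_const. }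
  rewrite (E x 0). eapply lim_minf_unique; eauto.
Qed.

Lemma sq_zero f : cont f -> has_integral (fun x => f x * f x) 0 -> forall x, f x = 0.
Proof.
  intros Hc H x. assert (f x * f x = 0). { apply (nonneg_zero (fun x => f x * f x) 0); auto.
    apply cont_mult; auto. intro; nra. }
  nra.
Qed.

Lemma Gmet_int s U r Z c : inA1 s U -> inA s r -> inA1 s Z -> inA s c ->
  has_integral (fun x => der U x * der Z x + r x * c x) (Gmet U r Z c).
Proof.
  intros. apply integrable_has. apply (A_integrable s). apply A_plus; apply A_mult; auto; eapply A1_der; eauto.
Qed.

Lemma derY s X a : inA1 s X -> inA s a -> der (Yfun X a) = Ypf X a.
Proof. intros HX Ha. apply der_fun. apply (core s X a HX Ha). Qed.

Lemma Y_A1 s X a : inA1 s X -> inA s a -> inA1 s (Yfun X a).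
Proof. intros HX Ha. destruct (core s X a HX Ha) as [H1 [H2 [H3 _]]]. exists (Ypf X a). auto. Qed.

Lemma part1 s X a Z c : inA1 s X -> inA s a -> inA1 s Z -> inA s c ->
  integrable (adstarG_integrand X a Z c) /\ adstarG X a Z c = Gmet (Yfun X a) (bfun X a) Z c.
Proof.
  intros HX Ha HZ Hc. destruct (core2 s X a Z c HX Ha HZ Hc) as [_ H]. split. eexists; eauto.
  unfold adstarG. rewrite (integral_eq _ _ H). unfold Gmet. rewrite (derY s X a HX Ha). reflexivity.
Qed.

Lemma part2t s U r X a : inA1 s X -> inA s a -> inA1 s U -> inA s r ->
  ((forall Z c, inA1 s Z -> inA s c -> Gmet U r Z c = - adstarG X a Z c) <->
   (forall x, U x = - X x * der X x + / 2 * prim (fun z => der X z ^ 2 + a z ^ 2) x /\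
              r x = - der (fun y => a y * X y) x)).
Proof.
  intros HX Ha HU Hr. destruct (core s X a HX Ha) as [CY1 [CY2 [CY3 [CY4 CY5]]]].
  pose proof (A1_smooth s X HX) as HsX. pose proof (A_smooth s a Ha) as Hsa.
  assert (Eab : der (fun y => a y * X y) = bfun X a).
  { rewrite der_mult by (apply smooth_D; auto). reflexivity. }
  assert (EY : forall x, Yfun X a x = X x * der X x - / 2 * prim (fun z => der X z ^ 2 + a z ^ 2) x).
  { intro x. unfold Yfun. rewrite der_sq by (apply smooth_D; auto). field. }
  split.
  - intro H.
    assert (Hsum : forall Z c, inA1 s Z -> inA s c ->
      has_integral (fun x => (der U x + Ypf X a x) * der Z x + (r x + bfun X a x) * c x) 0).
    { intros Z c HZ Hc. pose proof (Gmet_int s U r Z c HU Hr HZ Hc) as G1.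
      pose proof (Gmet_int s (Yfun X a) (bfun X a) Z c (Y_A1 s X a HX Ha) CY5 HZ Hc) as G2.
      rewrite (derY s X a HX Ha) in G2. pose proof (hasint_plus _ _ _ _ G1 G2) as G3.
      rewrite H, (proj2 (part1 s X a Z c HX Ha HZ Hc)) in G3 by auto.
      replace 0 with (- Gmet (Yfun X a) (bfun X a) Z c + Gmet (Yfun X a) (bfun X a) Z c) by ring.
      eapply hasint_ext; [|exact G3]. intro; cbv beta; ring. }
    assert (Hrb : forall x, r x + bfun X a x = 0).
    { apply sq_zero. apply (A_cont s). apply A_plus; auto.
      pose proof (Hsum (fun _ => 0) (fun x => r x + bfun X a x) (A_A1 s _ (A_zero s)) ltac:(apply A_plus; auto)) as H0.
      rewrite der_const in H0. eapply hasint_ext; [|exact H0]. intro; cbv beta; ring. }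
    assert (HUs : inA1 s (fun x => U x + Yfun X a x)) by (apply A1_plus; auto; apply Y_A1; auto).
    assert (DW : forall x, derivable_pt_lim (fun x => U x + Yfun X a x) x (der U x + Ypf X a x)).
    { intro x. apply dplus; auto. apply D_der, smooth_D. eapply A1_smooth; eauto. }
    assert (Hw : forall x, der U x + Ypf X a x = 0).
    { apply sq_zero. apply (A_cont s). apply A_plus; auto. eapply A1_der; eauto.
      pose proof (Hsum _ (fun _ => 0) HUs (A_zero s)) as H0.
      rewrite (der_fun _ _ DW) in H0. eapply hasint_ext; [|exact H0]. intro; cbv beta; ring. }
    assert (HW0 : forall x, U x + Yfun X a x = 0).
    { apply const_lim0. intro x. rewrite <- (Hw x). auto. eapply A1_lim; eauto. }
    intro x. split.
    + specialize (HW0 x). rewrite EY in HW0. lra.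
    + rewrite Eab. specialize (Hrb x). lra.
  - intros H Z c HZ Hc.
    assert (EU : U = fun x => - Yfun X a x).
    { extensionality x. rewrite EY. destruct (H x) as [H1 _]. rewrite H1. ring. }
    assert (Er : r = fun x => - bfun X a x).
    { extensionality x. destruct (H x) as [_ H2]. rewrite H2, Eab. ring. }
    rewrite (proj2 (part1 s X a Z c HX Ha HZ Hc)).
    pose proof (Gmet_int s (Yfun X a) (bfun X a) Z c (Y_A1 s X a HX Ha) CY5 HZ Hc) as G2.
    pose proof (hasint_scal (-1) _ _ G2) as G3.
    unfold Gmet at 1. apply integral_eq. subst U r.
    rewrite (der_fun (fun x => - Yfun X a x) (fun x => - Ypf X a x)).
    rewrite (derY s X a HX Ha) in G3. replace (- Gmet (Yfun X a) (bfun X a) Z c) with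
      (-1 * Gmet (Yfun X a) (bfun X a) Z c) by ring.
    eapply hasint_ext; [|exact G3]. intro; cbv beta; ring.
    intro x. apply dopp. auto.
Qed.


Lemma part3 s X a : inA s X -> inA s a -> (exists x, X x <> 0 \/ a x <> 0) ->
  ~ exists Y b, inA s Y /\ inA s b /\
      forall Z c, inA s Z -> inA s c -> adstarG X a Z c = Gmet Y b Z c.
Proof.
  intros HXA Ha [x0 Hx0] [Y [b [HY [Hb H]]]].
  pose proof (A_A1 s X HXA) as HX.
  destruct (core s X a HX Ha) as [CY1 [CY2 [CY3 [CY4 CY5]]]].
  assert (Hsum : forall Z c, inA s Z -> inA s c ->
      has_integral (fun x => (der Y x - Ypf X a x) * der Z x + (b x - bfun X a x) * c x) 0).
  { intros Z c HZ Hc. pose proof (A_A1 s Z HZ) as HZ1.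
    pose proof (Gmet_int s Y b Z c (A_A1 s Y HY) Hb HZ1 Hc) as G1.
    pose proof (Gmet_int s (Yfun X a) (bfun X a) Z c (Y_A1 s X a HX Ha) CY5 HZ1 Hc) as G2.
    rewrite (derY s X a HX Ha) in G2. pose proof (hasint_plus _ _ _ _ G1 (hasint_scal (-1) _ _ G2)) as G3.
    rewrite <- (H Z c HZ Hc), (proj2 (part1 s X a Z c HX Ha HZ1 Hc)) in G3.
    replace 0 with (Gmet (Yfun X a) (bfun X a) Z c + -1 * Gmet (Yfun X a) (bfun X a) Z c) by ring.
    eapply hasint_ext; [|exact G3]. intro; cbv beta; ring. }
  assert (Hbb : inA s (fun x => b x - bfun X a x)) by (apply A_minus; auto).
  assert (Hb0 : forall x, b x - bfun X a x = 0).
  { apply sq_zero. eapply A_cont; eauto.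
    pose proof (Hsum (fun _ => 0) _ (A_zero s) Hbb) as H0.
    rewrite der_const in H0. eapply hasint_ext; [|exact H0]. intro; cbv beta; ring. }
  set (Dd := fun x => der Y x - Ypf X a x).
  assert (HDd : inA s Dd) by (apply A_minus; auto; apply A_der; auto).
  pose proof (A_smooth s Dd HDd) as HsD.
  assert (DD0 : forall x, derivable_pt_lim Dd x (der Dd x)) by (apply D_der, smooth_D; auto).
  assert (DD1 : forall x, derivable_pt_lim (der Dd) x (der (der Dd) x)) by (apply D_der, smooth_D, smooth_der; auto).
  assert (H1 : has_integral (fun x => Dd x * der (der Dd) x) 0).
  { pose proof (Hsum (der Dd) (fun _ => 0) (A_der s _ HDd) (A_zero s)) as H0.
    eapply hasint_ext; [|exact H0]. intro; unfold Dd; cbv beta; ring. }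
  assert (H2 : has_integral (fun x => Dd x * der (der Dd) x + der Dd x * der Dd x) (0 - 0)).
  { apply (hasint_der (fun x => Dd x * der Dd x)).
    intro x. eapply dval. apply dmult; auto. ring.
    - apply lim_minf_mult0. apply (A_Dec s _ HDd). apply (Bnd_A s). apply A_der; auto.
    - apply lim_pinf_mult0. apply (A_Dec s _ HDd). apply (Bnd_A s). apply A_der; auto. }
  assert (H3 : has_integral (fun x => der Dd x * der Dd x) 0).
  { pose proof (hasint_plus _ _ _ _ H2 (hasint_scal (-1) _ _ H1)) as H4.
    replace 0 with (0 - 0 + -1 * 0) by ring. eapply hasint_ext; [|exact H4]. intro; cbv beta; ring. }
  assert (HD1 : forall x, der Dd x = 0) by (apply sq_zero; auto; apply (A_cont s); apply A_der; auto).
  assert (HD0 : forall x, Dd x = 0).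
  { apply const_lim0. intro x. rewrite <- (HD1 x). auto. apply (A_Dec s _ HDd). }
  assert (HW : forall x, Y x - Yfun X a x = 0).
  { apply const_lim0. intro x. eapply dval. apply dminus. apply D_der, smooth_D. eapply A_smooth; eauto.
    apply CY1. specialize (HD0 x). unfold Dd in HD0. lra.
    replace 0 with (0 + -1 * 0) by ring. apply (lim_minf_ext (fun x => Y x + -1 * Yfun X a x)). intro; ring.
    apply lim_minf_plus. apply (A_Dec s _ HY). apply lim_minf_scal. auto. }
  assert (HI : - / 2 * integral (qfun X a) = 0).
  { eapply lim_pinf_unique. exact CY4. apply (lim_pinf_ext Y). intro x. specialize (HW x). lra.
    apply (A_Dec s _ HY). }
  assert (Hq0 : forall x, qfun X a x = 0).
  { pose proof (q_A s X a HX Ha) as Hq. apply (nonneg_zero _ (integral (qfun X a))).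
    eapply A_cont; eauto. intro; unfold qfun; nra. apply integrable_has. eapply A_integrable; eauto. lra. }
  assert (Ha0 : forall x, a x = 0) by (intro x; specialize (Hq0 x); unfold qfun in Hq0; nra).
  assert (HX0 : forall x, X x = 0).
  { apply const_lim0. intro x. specialize (Hq0 x). unfold qfun in Hq0.
    eapply dval. apply D_der, smooth_D. eapply A_smooth; eauto. nra. apply (A_Dec s _ HXA). }
  destruct Hx0; auto.
Qed.

Theorem mainTheorem10 (s : Aspace) :
  (* (1) coadjoint formula, for all (X,a) in the Lie algebra A_1 x A of M~
         (which contains A x A), tested against all (Z,c) in A_1 x A:
         ad(X,a)^* Gcheck(X,a) = Gcheck(Y,b) with
         Y = 1/2 ((X^2)' - int_{-oo}^x (X'^2 + a^2)),  b = a'X + aX',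
     and (Y,b) lies in A_1 x A, so the geodesic equation exists on M~ *)
  (forall X a, inA1 s X -> inA s a ->
     let Y := fun x => / 2 * (der (fun y => X y ^ 2) x
                              - prim (fun y => der X y ^ 2 + a y ^ 2) x) in
     let b := fun x => der a x * X x + a x * der X x in
     inA1 s Y /\ inA s b /\
     forall Z c, inA1 s Z -> inA s c ->
       integrable (adstarG_integrand X a Z c) /\
       adstarG X a Z c = Gmet Y b Z c) /\
  (* (2) the geodesic equation v_t = - Gcheck^{-1} ad(v)^* Gcheck(v) on M~,
         for v = (u, rho), is the two-component Hunter--Saxton system *)
  (forall (u rho ut rhot : R -> R -> R),
     (forall t, inA1 s (u t)) -> (forall t, inA s (rho t)) ->
     (forall t, inA1 s (ut t)) -> (forall t, inA s (rhot t)) ->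
     (forall t x, derivable_pt_lim (fun t' => u t' x) t (ut t x)) ->
     (forall t x, derivable_pt_lim (fun t' => rho t' x) t (rhot t x)) ->
     ((forall t Z c, inA1 s Z -> inA s c ->
         Gmet (ut t) (rhot t) Z c = - adstarG (u t) (rho t) Z c)
      <->
      (forall t x,
         ut t x = - u t x * der (u t) x
                  + / 2 * prim (fun z => der (u t) z ^ 2 + rho t z ^ 2) x /\
         rhot t x = - der (fun y => rho t y * u t y) x))) /\
  (* (3) on M the geodesic equation does not exist *)
  (forall X a, inA s X -> inA s a -> (exists x, X x <> 0 \/ a x <> 0) ->
     ~ exists Y b, inA s Y /\ inA s b /\
         forall Z c, inA s Z -> inA s c -> adstarG X a Z c = Gmet Y b Z c).
Proof.
  split; [|split].
  - intros X a HX Ha. cbv zeta.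
    change (inA1 s (Yfun X a) /\ inA s (bfun X a) /\
      forall Z c, inA1 s Z -> inA s c ->
       integrable (adstarG_integrand X a Z c) /\ adstarG X a Z c = Gmet (Yfun X a) (bfun X a) Z c).
    split. apply Y_A1; auto. split. apply (core s X a HX Ha). intros Z c HZ Hc. apply (part1 s); auto.
  - intros u rho ut rhot Hu Hr Hut Hrt _ _. split.
    + intros H t. apply (part2t s (ut t) (rhot t) (u t) (rho t)); auto; intros Z c HZ Hc; apply H; auto.
    + intros H t. apply (part2t s (ut t) (rhot t) (u t) (rho t)); auto.
  - apply part3.
Qed.
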